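(* Let $V$ be a vector space over a field $F$, let $n\ge1$, and let $(p_j^+,p_j^-)_{j=1}^n$ be a valid widget in $V$. Fix $i\in\{1,\dots,n\}$ and $c\in F$. Then the widget obtained by replacing $p_i^+$ with $p_i^+ + c\,p_i^-$ (and leaving all other points unchanged) is again valid.
   Context: A widget with $n$ pairs in $V$ is an indexed family of $n$ pairs of vectors $p_j=(p_j^+,p_j^-)$, $j=1,\dots,n$, in $V$. A section of a widget is a set of points containing at most one point from each pair. A widget with $n$ pairs is legal if every section spans a linear subspace of $V$ of dimension at most $n-1$. A widget with $n$ pairs is full if the linear span of all its $2n$ points has dimension at least $n$. A widget is valid if it is both legal and full. *)

(* Defs.v *)
From mathcomp Require Import all_boot all_order all_algebra.
Set Implicit Arguments. Unset Strict Implicit. Unset Printing Implicit Defensive.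
Import GRing.Theory.
Local Open Scope ring_scope.

Definition lin_indep (F : fieldType) (V : lmodType F) (s : seq V) : Prop :=
  forall c : 'I_(size s) -> F,
    \sum_(k < size s) c k *: s`_k = 0 -> forall k, c k = 0.

(* dim span(A) <= d, for a set A of vectors (given as a predicate):
   every linearly independent finite family of vectors of A has <= d members.
   (For a set spanning a subspace W, this is exactly dim W <= d.) *)
Definition span_dim_le (F : fieldType) (V : lmodType F) (A : V -> Prop) (d : nat) : Prop :=
  forall s : seq V, (forall v, v \in s -> A v) -> lin_indep s -> (size s <= d)%N.

Definition span_dim_ge (F : fieldType) (V : lmodType F) (A : V -> Prop) (d : nat) : Prop :=
  exists s : seq V, [/\ forall v, v \in s -> A v, lin_indep s & (d <= size s)%N].

(* A widget with n pairs: pairs (pp j, pm j), j : 'I_n.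
   A section is given by a choice function sel : 'I_n -> option bool
   (None: no point from pair j; Some true: p_j^+; Some false: p_j^-). *)
Definition section_pts (F : fieldType) (V : lmodType F) (n : nat)
  (pp pm : 'I_n -> V) (sel : 'I_n -> option bool) : V -> Prop :=
  fun v => exists j, match sel j with
                     | Some true => v = pp j
                     | Some false => v = pm j
                     | None => False
                     end.

Definition all_pts (F : fieldType) (V : lmodType F) (n : nat)
  (pp pm : 'I_n -> V) : V -> Prop :=
  fun v => exists j, v = pp j \/ v = pm j.

Definition widget_legal (F : fieldType) (V : lmodType F) (n : nat) (pp pm : 'I_n -> V) : Prop :=
  forall sel : 'I_n -> option bool, span_dim_le (section_pts pp pm sel) n.-1.

Definition widget_full (F : fieldType) (V : lmodType F) (n : nat) (pp pm : 'I_n -> V) : Prop :=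
  span_dim_ge (all_pts pp pm) n.

Definition widget_valid (F : fieldType) (V : lmodType F) (n : nat) (pp pm : 'I_n -> V) : Prop :=
  widget_legal pp pm /\ widget_full pp pm.

(* Main.v *)
Require Import Defs.
From mathcomp Require Import all_boot all_order all_algebra.
From Stdlib Require Import Classical.
Set Implicit Arguments. Unset Strict Implicit. Unset Printing Implicit Defensive.
Import GRing.Theory.
Local Open Scope ring_scope.

Section S.
Variables (F : fieldType) (V : lmodType F).

Definition spn (t : seq V) (v : V) : Prop :=
  exists d : 'I_(size t) -> F, v = \sum_(k < size t) d k *: t`_k.

Lemma spn0 t : spn t 0.
Proof. exists (fun _ => 0); by rewrite big1 // => k _; rewrite scale0r. Qed.

Lemma spnD t u v : spn t u -> spn t v -> spn t (u + v).
Proof.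
move=> [d1 ->] [d2 ->]; exists (fun k => d1 k + d2 k).
by rewrite -big_split; apply: eq_bigr => k _; rewrite scalerDl.
Qed.

Lemma spnZ t a v : spn t v -> spn t (a *: v).
Proof.
move=> [d ->]; exists (fun k => a * d k).
by rewrite scaler_sumr; apply: eq_bigr => k _; rewrite scalerA.
Qed.

Lemma spn_mem t v : v \in t -> spn t v.
Proof.
move=> vt; have Hi : (index v t < size t)%N by rewrite index_mem.
exists (fun k => if k == Ordinal Hi then 1 else 0).
rewrite (bigD1 (Ordinal Hi)) //= eqxx scale1r nth_index // big1 ?addr0 //.
by move=> k /negbTE ->; rewrite scale0r.
Qed.

Lemma spn_trans t b v : (forall w, w \in t -> spn b w) -> spn t v -> spn b v.
Proof.
move=> H [d ->]; apply: (big_ind (spn b)); [exact: spn0|exact: spnD|].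
by move=> k _; apply: spnZ; apply: H; apply: mem_nth.
Qed.

Lemma spn_cons t w v : spn t v -> spn (w :: t) v.
Proof. by apply: spn_trans => u ut; apply: spn_mem; rewrite inE ut orbT. Qed.

Lemma indep_cons t v : lin_indep t -> ~ spn t v -> lin_indep (v :: t).
Proof.
move=> It Nv c /=; rewrite big_ord_recl /= => Hs.
have c0 : c ord0 = 0.
  apply/eqP; apply/negPn/negP => nz; apply: Nv.
  have -> : v = (- (c ord0)^-1) *: \sum_(i < size t) c (lift ord0 i) *: t`_i.
    have -> : \sum_(i < size t) c (lift ord0 i) *: t`_i = - (c ord0 *: v).
      by apply/eqP; rewrite -addr_eq0 addrC Hs.
    by rewrite scalerN scaleNr opprK scalerA mulVf // scale1r.
  apply: spnZ; exists (fun i => c (lift ord0 i)); by [].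
move: Hs; rewrite c0 scale0r add0r => /It Hr.
by case=> [[|k] Hk]; [apply: etrans c0; congr c; apply: val_inj|
  have := Hr (Ordinal (Hk : (k < size t)%N)); apply: etrans; congr c; apply: val_inj].
Qed.

Lemma steinitz t s : (forall v, v \in s -> spn t v) -> lin_indep s -> (size s <= size t)%N.
Proof.
move=> Hs Is.
pose f (x : 'rV[F]_(size t)) : V := \sum_(j < size t) x 0 j *: t`_j.
have [d Hd] : exists d : 'I_(size s) -> 'rV[F]_(size t), forall k : 'I_(size s), s`_k = f (d k).
  have H : forall k : 'I_(size s), exists x : 'rV[F]_(size t), s`_k = f x.
    move=> k; have [e Ee] : spn t s`_k by apply: Hs; apply: mem_nth.
    exists (\row_j e j); rewrite Ee /f; apply: eq_bigr => j _; by rewrite mxE.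
  exact: (fin_all_exists H).
pose X := [tuple d i | i < size s].
have XE : forall i : 'I_(size s), X`_i = d i by move=> i; rewrite -tnth_nth tnth_mktuple.
have fr : free X.
  apply/freeP => k Hk; apply: Is.
  have E : f (\sum_(i < size s) k i *: X`_i) = 0.
    by rewrite Hk /f big1 // => j _; rewrite mxE scale0r.
  apply: etrans E; rewrite /f.
  under eq_bigr => i _ do rewrite Hd /f scaler_sumr.
  rewrite exchange_big /=; apply: eq_bigr => j _.
  rewrite summxE scaler_suml; apply: eq_bigr => i _.
  by rewrite XE !mxE scalerA.
rewrite -(size_tuple X) -(eqP fr).
have := dimvS (subvf <<X>>%VS); rewrite dimvf /dim /= mul1n.
by [].
Qed.

Lemma indep_nil : lin_indep ([::] : seq V).
Proof. by move=> c _ []. Qed.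

Lemma basis_ex (A : V -> Prop) (t : seq V) : exists b : seq V,
  [/\ forall v, v \in b -> A v, lin_indep b & forall v, v \in t -> A v -> spn b v].
Proof.
elim: t => [|w t [b [Hb Ib Sb]]]; first by exists [::]; split => //; exact: indep_nil.
case: (classic (A w /\ ~ spn b w)) => [[Aw Nw]|H].
  exists (w :: b); split.
  - by move=> v; rewrite inE => /orP[/eqP ->|]; [|apply: Hb].
  - exact: indep_cons.
  - move=> v; rewrite inE => /orP[/eqP -> _|vt Av]; first by apply: spn_mem; rewrite inE eqxx.
    by apply: spn_cons; apply: Sb.
exists b; split => // v; rewrite inE => /orP[/eqP -> Av|]; last exact: Sb.
by apply: NNPP => N; apply: H.
Qed.

Lemma sec_sub n (pp pm : 'I_n -> V) (s1 s2 : 'I_n -> option bool) :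
  (forall j, s1 j <> None -> s2 j = s1 j) ->
  forall v, section_pts pp pm s1 v -> section_pts pp pm s2 v.
Proof.
move=> H v [j Hj]; exists j; case E: (s1 j) Hj => [b'|] //.
by rewrite H ?E.
Qed.

Definition allL n (pp pm : 'I_n -> V) := map pp (enum 'I_n) ++ map pm (enum 'I_n).

Lemma allL_mem n (pp pm : 'I_n -> V) v : all_pts pp pm v -> v \in allL pp pm.
Proof.
by move=> [j [->|->]]; rewrite mem_cat; apply/orP; [left|right];
  apply: map_f; rewrite mem_enum.
Qed.

End S.

Unset Implicit Arguments.

Theorem lemma2 (F : fieldType) (V : lmodType F) (n : nat) (hn : (1 <= n)%N)
  (pp pm : 'I_n -> V) (i : 'I_n) (c : F) :
  widget_valid pp pm ->
  widget_valid (fun j => if j == i then pp i + c *: pm i else pp j) pm.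
Proof.
move=> [HL [s [Hs Is Hsz]]].
set q := pp i + c *: pm i.
set pp' := fun j => if j == i then q else pp j.
split.
- move=> sel.
  case Ei: (sel i) => [[|]|]; last first.
  + move=> s0 Hs0; apply: (HL sel) => v /Hs0 [j Hj]; exists j.
    case: (eqVneq j i) Hj => [->|ne]; first by rewrite Ei.
    by rewrite /pp' (negbTE ne).
  + move=> s0 Hs0; apply: (HL sel) => v /Hs0 [j Hj]; exists j.
    case: (eqVneq j i) Hj => [->|ne]; first by rewrite Ei.
    by rewrite /pp' (negbTE ne).
  pose selT j := if j == i then None else sel j.
  pose selP (bo : bool) j := if j == i then Some bo else sel j.
  have [b [Hb Ib Sb]] := basis_ex (section_pts pp pm selT) (allL pp pm).
  have bP : forall bo v, v \in b -> section_pts pp pm (selP bo) v.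
    move=> bo v /Hb; apply: sec_sub => j; rewrite /selT /selP.
    by case: (j == i).
  move=> s0 Hs0 Is0.
  have S0 : forall v, v \in s0 -> spn (q :: b) v.
    move=> v /Hs0 [j Hj]; case: (eqVneq j i) Hj => [->|ne].
      by rewrite Ei /pp' eqxx => ->; apply: spn_mem; rewrite inE eqxx.
    move=> Hj; apply: spn_cons; apply: Sb.
      apply: allL_mem; move: Hj; rewrite /pp' (negbTE ne).
      by case: (sel j) => [[|]|] // ->; exists j; [left|right].
    exists j; rewrite /selT (negbTE ne); move: Hj; rewrite /pp' (negbTE ne).
    by [].
  case: (classic (spn b q)) => Hq.
    apply: leq_trans (steinitz _ Is0) (HL selT b Hb Ib).
    move=> v /S0; apply: spn_trans => w; rewrite inE => /orP[/eqP ->|wb] //.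
    exact: spn_mem.
  have [bo [u [Hu [_ Nu]]]] : exists bo : bool, exists u,
      section_pts pp pm (selP bo) u /\ u = (if bo then pp i else pm i) /\ ~ spn b u.
    case: (classic (spn b (pp i))) => Hp.
      exists false, (pm i); split; first by exists i; rewrite /selP eqxx.
      split => // Hm; apply: Hq; apply: spnD => //; exact: spnZ.
    exists true, (pp i); split; first by exists i; rewrite /selP eqxx.
    by [].
  have Hub := HL (selP bo) (u :: b).
  have Hs1 : forall v, v \in u :: b -> section_pts pp pm (selP bo) v.
    by move=> v; rewrite inE => /orP[/eqP ->|]; [|apply: bP].
  have := Hub Hs1 (indep_cons Ib Nu).
  by apply: leq_trans (steinitz S0 Is0).
- have [b [Hb Ib Sb]] := basis_ex (all_pts pp' pm) (allL pp' pm).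
  have Hm : forall j, spn b (pm j).
    move=> j; apply: Sb; [apply: allL_mem|]; exists j; right => //.
  have Hp : forall j, spn b (pp' j).
    move=> j; apply: Sb; [apply: allL_mem|]; exists j; left => //.
  exists b; split => //; apply: leq_trans Hsz _; apply: steinitz => // v /Hs [j [->|->]] //.
  case: (eqVneq j i) => [->|ne].
    have -> : pp i = pp' i + (- c) *: pm i by rewrite /pp' eqxx /q scaleNr addrK.
    by apply: spnD => //; apply: spnZ.
  by have := Hp j; rewrite /pp' (negbTE ne).
Qed.
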